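(* Let $n>5$ with $n\equiv 1\pmod 4$ and put $m=n-1$. Over all even $r\in[2,n-3]$, $E(D_n^s[\boldsymbol r,\boldsymbol{n-r-1}])$ attains its maximum at $r=4$. More precisely: if $\frac m2\equiv 0\pmod 4$, then $E(D_n^s[\boldsymbol r,\boldsymbol{m-r}])$ is strictly decreasing as $r$ runs through $4,8,\dots,\frac m2,\ \frac m2-2,\frac m2-6,\dots,2$ (in this order); if $\frac m2\equiv 2\pmod 4$, then it is strictly decreasing as $r$ runs through $4,8,\dots,\frac m2-2,\ \frac m2,\frac m2-4,\dots,2$.
   Context: A signed digraph (sidigraph) is a digraph in which every arc carries a sign $+1$ or $-1$; its adjacency matrix $A(S)=[a_{ij}]$ has $a_{ij}$ equal to the sign of the arc $w_iw_j$ if it exists and $0$ otherwise. If $\rho_1,\dots,\rho_n$ are the eigenvalues of $A(S)$, the energy of $S$ is $E(S)=\sum_{k=1}^n|\mathrm{Re}(\rho_k)|$. The sign of a directed cycle is the product of the signs of its arcs. For $k\ge 2$, $C_k$ denotes a directed cycle of length $k$ with sign $+1$ and $\boldsymbol{C}_k$ a directed cycle of length $k$ with sign $-1$. It is known that $E(C_k)=2\cot\frac{\pi}{k}$ if $k\equiv0\pmod 4$, $2\csc\frac{\pi}{k}$ if $k\equiv 2\pmod 4$, $\csc\frac{\pi}{2k}$ if $k$ is odd; and $E(\boldsymbol C_k)=2\csc\frac{\pi}{k}$ if $k\equiv0\pmod 4$, $2\cot\frac{\pi}{k}$ if $k\equiv 2\pmod 4$, $\csc\frac{\pi}{2k}$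 if $k$ is odd. For integers $p,q\ge 2$ with $p+q\le n$, $D_n^s[p,q]$, $D_n^s[\boldsymbol p,\boldsymbol q]$, $D_n^s[\boldsymbol p,q]$, $D_n^s[p,\boldsymbol q]$ denote an $n$-vertex sidigraph whose only directed cycles are two vertex-disjoint cycles of lengths $p$ and $q$ (all other vertices lying on no directed cycle), where a bold entry indicates that the cycle of that length is negative and a non-bold entry that it is positive. Its energy is the sum of the energies of its two cycles, e.g. $E(D_n^s[\boldsymbol p,\boldsymbol q])=E(\boldsymbol C_p)+E(\boldsymbol C_q)$; in particular the order of the two entries does not matter. *)

(* Defs.v *)
From Stdlib Require Import Reals Lra Lia Arith List Sorted.
Import ListNotations.
Open Scope R_scope.

Definition cot (x : R) : R := cos x / sin x.
Definition csc (x : R) : R := 1 / sin x.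

(* Energy E(C_k) of the NEGATIVE directed k-cycle (bold C_k), k >= 2,
   as given in the context:
   2 csc(pi/k) if k = 0 mod 4, 2 cot(pi/k) if k = 2 mod 4, csc(pi/(2k)) if k odd. *)
Definition neg_cycle_energy (k : nat) : R :=
  if Nat.eqb (k mod 4) 0 then 2 * csc (PI / INR k)
  else if Nat.eqb (k mod 4) 2 then 2 * cot (PI / INR k)
  else csc (PI / (2 * INR k)).

(* E(D_n^s[bold p, bold q]) = E(bold C_p) + E(bold C_q). *)
Definition energy_D_negneg (p q : nat) : R :=
  neg_cycle_energy p + neg_cycle_energy q.

(* Main.v *)
Require Import Defs.
From Stdlib Require Import Reals Lra Lia Arith List Sorted ZArith ZifyNat.
Import ListNotations.
Open Scope R_scope.
From Stdlib Require Import Reals Lra Lia ZArith ZifyNat.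
From Coquelicot Require Import Coquelicot.
Open Scope R_scope.

Definition hh (x : R) := / sin (PI / x).
Definition kk (x : R) := cos (PI / x) / sin (PI / x).

Lemma sinpos x : 1 < x -> 0 < sin (PI / x).
Proof. intros. apply sin_gt_0. apply Rdiv_lt_0_compat; [apply PI_RGT_0|lra].
  apply Rmult_lt_reg_r with x; [lra|]. unfold Rdiv; rewrite Rmult_assoc, Rinv_l by lra.
  pose proof PI_RGT_0; nra. Qed.

Lemma hh_der x : 1 < x -> derivable_pt_lim hh x (PI * cos (PI/x) / (x^2 * sin (PI/x)^2)).
Proof. intros Hx. pose proof (sinpos x Hx). apply is_derive_Reals. unfold hh.
  auto_derive. lra. change (PI * / x) with (PI / x). field. split; lra. Qed.

Lemma kk_der x : 1 < x -> derivable_pt_lim kk x (PI / (x^2 * sin (PI/x)^2)).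
Proof. intros Hx. pose proof (sinpos x Hx). apply is_derive_Reals. unfold kk.
  auto_derive. lra. change (PI * / x) with (PI / x). field_simplify. 2: split; lra.
  2: split; lra. pose proof (sin2_cos2 (PI/x)) as E. unfold Rsqr in E. replace (PI * sin (PI / x) ^ 2 + PI * cos (PI / x) ^ 2) with PI by (rewrite <- (Rmult_1_r PI) at 1; rewrite <- E; ring). reflexivity. Qed.

Lemma slope (F F' : R -> R) lo :
  (forall x, lo < x -> derivable_pt_lim F x (F' x)) ->
  (forall a b, lo < a -> a < b -> F' a < F' b) ->
  forall x y d, lo < x -> x < y -> 0 < d -> F (x + d) - F x < F (y + d) - F y.
Proof. intros HD HI x y d Hx Hxy Hd.
  set (G := fun z => F (z + (y - x)) - F z).
  set (G' := fun z => F' (z + (y - x)) - F' z).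
  destruct (MVT_cor2 G G' x (x + d)) as [c [Hc1 Hc2]]. lra.
  { intros c Hc. unfold G, G'. apply derivable_pt_lim_minus; [|apply HD; lra].
    replace (F' (c + (y - x))) with (F' (c + (y-x)) * 1) by ring.
    apply (derivable_pt_lim_comp (fun z => z + (y - x)) F c 1).
    - replace 1 with (1 + 0) by ring. apply derivable_pt_lim_plus. apply derivable_pt_lim_id. apply derivable_pt_lim_const.
    - apply HD. lra. }
  assert (G' c > 0). { unfold G'. assert (F' c < F' (c + (y-x))) by (apply HI; lra). lra. }
  unfold G in Hc1. replace (x + d + (y - x)) with (y + d) in Hc1 by ring.
  replace (x + (y - x)) with y in Hc1 by ring. nra. Qed.

Lemma slope_le (F F' : R -> R) lo :
  (forall x, lo < x -> derivable_pt_lim F x (F' x)) ->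
  (forall a b, lo < a -> a < b -> F' a < F' b) ->
  forall x y d, lo < x -> x <= y -> 0 <= d -> F (x + d) - F x <= F (y + d) - F y.
Proof. intros. destruct (Req_dec x y). subst; lra. destruct (Req_dec d 0). subst.
  rewrite !Rplus_0_r; lra. left; apply (slope F F' lo); auto; lra. Qed.

Lemma sin_bnds a : 0 <= a -> a <= PI -> a - a^3/6 <= sin a <= a - a^3/6 + a^5/120.
Proof. intros. pose proof (sin_bound a 0 H H0) as B. simpl in B.
  replace (sin_approx a 1) with (a - a^3/6) in B by (unfold sin_approx, sin_term; simpl; field).
  replace (sin_approx a 2) with (a - a^3/6 + a^5/120) in B by (unfold sin_approx, sin_term; simpl; field).
  exact B. Qed.

Lemma cos_bnds a : - PI/2 <= a -> a <= PI/2 -> 1 - a^2/2 <= cos a <= 1 - a^2/2 + a^4/24.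
Proof. intros. pose proof (cos_bound a 0 H H0) as B. simpl in B.
  replace (cos_approx a 1) with (1 - a^2/2) in B by (unfold cos_approx, cos_term; simpl; field).
  replace (cos_approx a 2) with (1 - a^2/2 + a^4/24) in B by (unfold cos_approx, cos_term; simpl; field).
  exact B. Qed.

Definition phi t := t^2 * cos t / sin t ^ 2.
Definition phi' t := t * (2 * sin t * cos t - t * sin t ^ 2 - 2 * t * cos t ^ 2) / sin t ^ 3.

Lemma phi_der t : 0 < sin t -> derivable_pt_lim phi t (phi' t).
Proof. intros. apply is_derive_Reals. unfold phi, phi'. auto_derive. nra. field. lra. Qed.

Lemma phi'_neg t : 0 < t -> t < PI / 3 -> phi' t < 0.
Proof. intros. pose proof PI2_3_2. pose proof PI_4.
  assert (Hs: 0 < sin t) by (apply sin_gt_0; lra).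
  destruct (sin_bnds t) as [s1 s2]; try lra. destruct (cos_bnds t) as [c1 c2]; try lra.
  pose proof (sin2_cos2 t) as E. unfold Rsqr in E.
  assert (t < 4/3) by lra.
  assert (0 <= 1 - t^2/2) by nra.
  assert (N: 2 * sin t * cos t < t * (1 + cos t ^ 2)).
  { assert (2 * sin t * cos t <= 2 * (t - t^3/6 + t^5/120) * (1 - t^2/2 + t^4/24)).
    { assert (0 <= cos t) by lra. assert (0 <= sin t) by lra.
      apply Rmult_le_compat; nra. }
    assert (t * (1 + (1 - t^2/2)^2) <= t * (1 + cos t ^ 2)).
    { apply Rmult_le_compat_l; [lra|]. apply Rplus_le_compat_l. apply pow_incr; lra. }
    assert (2 * (t - t^3/6 + t^5/120) * (1 - t^2/2 + t^4/24) < t * (1 + (1 - t^2/2)^2)).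
    { assert (0 < t^2) by nra. assert (t^2 < 2) by nra.
      replace (t * (1 + (1 - t ^ 2 / 2) ^ 2) - 2 * (t - t ^ 3 / 6 + t ^ 5 / 120) * (1 - t ^ 2 / 2 + t ^ 4 / 24))
        with (2*t * (t^2 * ((1/6 - t^2/120) + t^4 * (1/90 - t^2/2880)))) by field.
      assert (0 < 1/6 - t^2/120) by lra. assert (0 < 1/90 - t^2/2880) by lra.
      assert (0 < t^4) by (replace (t^4) with (t^2*t^2) by ring; nra).
      assert (0 < (t^2 * ((1/6 - t^2/120) + t^4 * (1/90 - t^2/2880)))).
      { apply Rmult_lt_0_compat; [lra|]. assert (0 < t^4 * (1/90 - t^2/2880)) by (apply Rmult_lt_0_compat; lra). lra. }
      assert (0 < 2*t) by lra. 
      assert (0 < 2*t * (t^2 * ((1/6 - t^2/120) + t^4 * (1/90 - t^2/2880)))) by (apply Rmult_lt_0_compat; lra). lra. }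
    lra. }
  assert (HN: 2 * sin t * cos t - t * sin t ^ 2 - 2 * t * cos t ^ 2 < 0).
  { replace (sin t ^ 2) with (1 - cos t ^ 2) by (simpl; lra). nra. }
  assert (0 < / sin t ^ 3) by (apply Rinv_0_lt_compat; apply pow_lt; lra).
  unfold phi', Rdiv. assert (t * (2 * sin t * cos t - t * sin t ^ 2 - 2 * t * cos t ^ 2) < 0) by nra.
  nra. Qed.

Lemma phi_decr a b : 0 < a -> a < b -> b < PI / 3 -> phi b < phi a.
Proof. intros. pose proof PI2_3_2.
  destruct (MVT_cor2 phi phi' a b) as [c [E Hc]]. lra.
  { intros. apply phi_der. apply sin_gt_0; lra. }
  assert (phi' c < 0) by (apply phi'_neg; lra). nra. Qed.

Lemma hh'_incr a b : 3 < a -> a < b ->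
  PI * cos (PI/a) / (a^2 * sin (PI/a)^2) < PI * cos (PI/b) / (b^2 * sin (PI/b)^2).
Proof. intros. pose proof PI_RGT_0. pose proof (sinpos a ltac:(lra)). pose proof (sinpos b ltac:(lra)).
  assert (forall x, 0 < x -> 0 < sin (PI/x) -> PI * cos (PI/x) / (x^2 * sin (PI/x)^2) = phi (PI/x) / PI).
  { intros. unfold phi. field. lra. }
  rewrite !H4 by lra. unfold Rdiv at 1 3. apply Rmult_lt_compat_r. apply Rinv_0_lt_compat; lra.
  apply phi_decr.
  - apply Rdiv_lt_0_compat; lra.
  - apply Rmult_lt_compat_l; [lra|]. apply Rinv_lt_contravar; nra.
  - apply Rmult_lt_compat_l; [lra|]. apply Rinv_lt_contravar; nra. Qed.


Definition psi t := t^2 / sin t ^ 2.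
Definition psi' t := 2 * t * (sin t - t * cos t) / sin t ^ 3.

Lemma psi_der t : 0 < sin t -> derivable_pt_lim psi t (psi' t).
Proof. intros. apply is_derive_Reals. unfold psi, psi'. auto_derive. nra. field. lra. Qed.

Lemma psi'_pos t : 0 < t -> t < 2 * PI / 3 -> 0 < psi' t.
Proof. intros. pose proof PI2_3_2. pose proof PI_4.
  assert (Hs: 0 < sin t) by (apply sin_gt_0; lra).
  assert (t * cos t < sin t).
  { destruct (Rle_lt_dec t (PI/2)).
    - destruct (sin_bnds t) as [s1 s2]; try lra. destruct (cos_bnds t) as [c1 c2]; try lra.
      assert (t * cos t <= t * (1 - t^2/2 + t^4/24)) by (apply Rmult_le_compat_l; lra).
      assert (t <= 2) by lra.
      assert (t * (1 - t^2/2 + t^4/24) < t - t^3/6).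
      { assert (E: t - t^3/6 - t * (1 - t^2/2 + t^4/24) = t^3 * (1/3 - t^2/24)) by field.
        assert (0 < t^3) by (apply pow_lt; lra). assert (0 < 1/3 - t^2/24) by nra.
        assert (0 < t^3 * (1/3 - t^2/24)) by (apply Rmult_lt_0_compat; lra). lra. }
      lra.
    - assert (cos t < 0) by (apply cos_lt_0; lra). nra. }
  unfold psi', Rdiv. assert (0 < / sin t ^ 3) by (apply Rinv_0_lt_compat; apply pow_lt; lra).
  assert (0 < 2 * t * (sin t - t * cos t)) by nra. nra. Qed.

Lemma psi_incr a b : 0 < a -> a < b -> b < 2 * PI / 3 -> psi a < psi b.
Proof. intros. pose proof PI2_3_2.
  destruct (MVT_cor2 psi psi' a b) as [c [E Hc]]. lra.
  { intros. apply psi_der. apply sin_gt_0; lra. }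
  assert (0 < psi' c) by (apply psi'_pos; lra). nra. Qed.

Lemma kk'_decr a b : 3/2 < a -> a < b ->
  PI / (b^2 * sin (PI/b)^2) < PI / (a^2 * sin (PI/a)^2).
Proof. intros. pose proof PI_RGT_0. pose proof (sinpos a ltac:(lra)). pose proof (sinpos b ltac:(lra)).
  assert (forall x, 0 < x -> 0 < sin (PI/x) -> PI / (x^2 * sin (PI/x)^2) = psi (PI/x) / PI).
  { intros. unfold psi. field. lra. }
  rewrite !H4 by lra. unfold Rdiv at 1 3. apply Rmult_lt_compat_r. apply Rinv_0_lt_compat; lra.
  apply psi_incr.
  - apply Rdiv_lt_0_compat; lra.
  - apply Rmult_lt_compat_l; [lra|]. apply Rinv_lt_contravar; nra.
  - unfold Rdiv. rewrite (Rmult_comm 2 PI), Rmult_assoc. apply Rmult_lt_compat_l; [lra|].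
    apply Rmult_lt_reg_r with a; [lra|]. rewrite Rinv_l by lra. lra. Qed.

Lemma hh_slope x y d : 3 < x -> x < y -> 0 < d -> hh (x + d) - hh x < hh (y + d) - hh y.
Proof. apply (slope hh (fun x => PI * cos (PI/x) / (x^2 * sin (PI/x)^2)) 3).
  intros; apply hh_der; lra. intros; apply hh'_incr; lra. Qed.
Lemma hh_slope_le x y d : 3 < x -> x <= y -> 0 <= d -> hh (x + d) - hh x <= hh (y + d) - hh y.
Proof. apply (slope_le hh (fun x => PI * cos (PI/x) / (x^2 * sin (PI/x)^2)) 3).
  intros; apply hh_der; lra. intros; apply hh'_incr; lra. Qed.

Lemma mkk_slope x y d : 3/2 < x -> x < y -> 0 < d -> kk (y + d) - kk y < kk (x + d) - kk x.
Proof. intros. pose proof (slope (fun z => - kk z) (fun z => - (PI / (z^2 * sin (PI/z)^2))) (3/2)) as S.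
  simpl in S. assert (- kk (x + d) - - kk x < - kk (y + d) - - kk y); [|lra].
  apply S; auto. intros. apply derivable_pt_lim_opp. apply kk_der; lra.
  intros. apply Ropp_lt_contravar. apply kk'_decr; lra. Qed.
Lemma mkk_slope_le x y d : 3/2 < x -> x <= y -> 0 <= d -> kk (y + d) - kk y <= kk (x + d) - kk x.
Proof. intros. pose proof (slope_le (fun z => - kk z) (fun z => - (PI / (z^2 * sin (PI/z)^2))) (3/2)) as S.
  simpl in S. assert (- kk (x + d) - - kk x <= - kk (y + d) - - kk y); [|lra].
  apply S; auto. intros. apply derivable_pt_lim_opp. apply kk_der; lra.
  intros. apply Ropp_lt_contravar. apply kk'_decr; lra. Qed.

Lemma kk_lt_hh x : 2 < x -> kk x < hh x.
Proof. intros. pose proof (sinpos x ltac:(lra)). unfold kk, hh.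
  assert (cos (PI/x) < 1).
  { pose proof PI_RGT_0. assert (0 < PI / x) by (apply Rdiv_lt_0_compat; lra).
    assert (PI / x < PI / 2). { unfold Rdiv; apply Rmult_lt_compat_l; [lra|]. apply Rinv_lt_contravar; nra. }
    pose proof PI2_3_2. destruct (cos_bnds (PI/x)) as [_ c2]; try lra.
    pose proof PI_4. assert (PI/x < 2) by lra. set (u := PI/x) in *.
    assert (0 < u^2) by (apply pow_lt; lra).
    assert (u^4 = u^2 * u^2) by ring. assert (u^2 = u*u) by ring.
    assert (u^2 < 4) by nra. nra. }
  assert (0 < / sin (PI/x)) by (apply Rinv_0_lt_compat; lra). unfold Rdiv at 1. nra. Qed.

Definition F (m r : nat) := energy_D_negneg r (m - r).

Lemma F0 m r : (m mod 4 = 0)%nat -> (r mod 4 = 0)%nat -> (r <= m)%nat ->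
  F m r = 2 * hh (INR r) + 2 * hh (INR m - INR r).
Proof. intros. unfold F, energy_D_negneg, neg_cycle_energy.
  assert (((m - r) mod 4 = 0)%nat) by lia. rewrite H0, H2. cbn [Nat.eqb].
  rewrite minus_INR by lia. unfold csc, hh. unfold Rdiv at 1 3. rewrite !Rmult_1_l. reflexivity. Qed.

Lemma F2 m r : (m mod 4 = 0)%nat -> (r mod 4 = 2)%nat -> (r <= m)%nat ->
  F m r = 2 * kk (INR r) + 2 * kk (INR m - INR r).
Proof. intros. unfold F, energy_D_negneg, neg_cycle_energy.
  assert (((m - r) mod 4 = 2)%nat) by lia. rewrite H0, H2. cbn [Nat.eqb].
  rewrite minus_INR by lia. reflexivity. Qed.

Lemma INR4 : INR 4 = 4. Proof. simpl; ring. Qed.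
Lemma INR2 : INR 2 = 2. Proof. simpl; ring. Qed.

Ltac inr_le H := apply le_INR in H; repeat rewrite ?plus_INR, ?mult_INR, ?INR4, ?INR2 in H; simpl INR in H.

Lemma stepC m r : (m mod 4 = 0)%nat -> (r mod 4 = 0)%nat -> (4 <= r)%nat -> (2*(r+4) <= m)%nat ->
  F m r > F m (r + 4).
Proof. intros. rewrite (F0 m r), (F0 m (r+4)) by lia. rewrite plus_INR, INR4.
  inr_le H1. inr_le H2. set (x := INR r) in *. set (mm := INR m) in *.
  pose proof (hh_slope x (mm - x - 4) 4 ltac:(lra) ltac:(lra) ltac:(lra)).
  replace (mm - x - 4 + 4) with (mm - x) in H3 by ring.
  replace (mm - (x + 4)) with (mm - x - 4) by ring. lra. Qed.

Lemma stepK m r : (m mod 4 = 0)%nat -> (r mod 4 = 2)%nat -> (2 <= r)%nat -> (2*(r+4) <= m)%nat ->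
  F m (r + 4) > F m r.
Proof. intros. rewrite (F2 m r), (F2 m (r+4)) by lia. rewrite plus_INR, INR4.
  inr_le H1. inr_le H2. set (x := INR r) in *. set (mm := INR m) in *.
  pose proof (mkk_slope x (mm - x - 4) 4 ltac:(lra) ltac:(lra) ltac:(lra)).
  replace (mm - x - 4 + 4) with (mm - x) in H3 by ring.
  replace (mm - (x + 4)) with (mm - x - 4) by ring. lra. Qed.

Lemma juncA m M : (m = 2 * M)%nat -> (M mod 4 = 0)%nat -> (4 <= M)%nat ->
  F m M > F m (M - 2).
Proof. intros. rewrite (F0 m M), (F2 m (M-2)) by lia. rewrite minus_INR, INR2 by lia.
  subst m. rewrite mult_INR, INR2. inr_le H1. set (x := INR M) in *.
  pose proof (mkk_slope_le (x - 2) x 2 ltac:(lra) ltac:(lra) ltac:(lra)).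
  replace (x - 2 + 2) with x in H by ring.
  pose proof (kk_lt_hh x ltac:(lra)).
  replace (2 * x - x) with x by ring. replace (2 * x - (x - 2)) with (x + 2) by ring. lra. Qed.

Lemma juncB m M : (m = 2 * M)%nat -> (M mod 4 = 2)%nat -> (6 <= M)%nat ->
  F m (M - 2) > F m M.
Proof. intros. rewrite (F2 m M), (F0 m (M-2)) by lia. rewrite minus_INR, INR2 by lia.
  subst m. rewrite mult_INR, INR2. inr_le H1. set (x := INR M) in *.
  pose proof (hh_slope_le (x - 2) x 2 ltac:(lra) ltac:(lra) ltac:(lra)).
  replace (x - 2 + 2) with x in H by ring.
  pose proof (kk_lt_hh x ltac:(lra)).
  replace (2 * x - x) with x by ring. replace (2 * x - (x - 2)) with (x + 2) by ring. lra. Qed.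

Lemma maxpart m r : (m mod 4 = 0)%nat -> (8 <= m)%nat -> (2 <= r <= m - 2)%nat -> Nat.even r = true ->
  F m r <= F m 4.
Proof. intros Hm H8 Hr He. rewrite (F0 m 4) by lia. rewrite INR4.
  assert (r mod 4 = 0 \/ r mod 4 = 2)%nat.
  { rewrite Nat.even_spec in He. destruct He as [p Hp]. lia. }
  destruct H as [H|H].
  - rewrite (F0 m r) by lia. assert (4 <= r <= m - 4)%nat by lia.
    destruct H0 as [H0 H1']. assert (H1 : (r + 4 <= m)%nat) by lia.
    inr_le H0. inr_le H1. set (x := INR r) in *. set (mm := INR m) in *.
    pose proof (hh_slope_le 4 (mm - x) (x - 4) ltac:(lra) ltac:(lra) ltac:(lra)).
    replace (4 + (x - 4)) with x in H2 by ring. replace (mm - x + (x - 4)) with (mm - 4) in H2 by ring. lra.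
  - rewrite (F2 m r) by lia. destruct Hr as [H0 H1']. assert (H1 : (r + 2 <= m)%nat) by lia.
    inr_le H0. inr_le H1. inr_le H8. set (x := INR r) in *. set (mm := INR m) in *.
    set (M := mm / 2).
    assert (Hk: forall y, 2 <= y -> y <= M -> kk y + kk (mm - y) <= 2 * kk M).
    { intros y Hy1 Hy2. pose proof (mkk_slope_le y M (M - y) ltac:(lra) ltac:(lra) ltac:(lra)).
      replace (y + (M - y)) with M in H2 by ring. replace (M + (M - y)) with (mm - y) in H2 by (unfold M; field). lra. }
    assert (kk x + kk (mm - x) <= 2 * kk M).
    { destruct (Rle_lt_dec x M). apply Hk; lra.
      replace (kk x + kk (mm - x)) with (kk (mm - x) + kk (mm - (mm - x))) by (replace (mm - (mm - x)) with x by ring; ring).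
      apply Hk; unfold M in *; lra. }
    pose proof (kk_lt_hh M ltac:(unfold M; lra)).
    pose proof (hh_slope_le 4 M (M - 4) ltac:(lra) ltac:(unfold M; lra) ltac:(unfold M; lra)).
    replace (4 + (M - 4)) with M in H4 by ring. replace (M + (M - 4)) with (mm - 4) in H4 by (unfold M; field). lra.
Qed.

Lemma LS_map {A} (R : A -> A -> Prop) (g : nat -> A) L : forall a,
  (forall i, (a <= i)%nat -> (S i < a + L)%nat -> R (g i) (g (S i))) -> LocallySorted R (map g (seq a L)).
Proof. induction L as [|L IH]; intros a H. constructor.
  destruct L. simpl. constructor.
  specialize (IH (S a)). simpl in IH |- *. apply LSorted_consn.
  apply IH. intros; apply H; lia. apply H; lia. Qed.

Lemma map_shift {A} (g : nat -> A) L : forall s t,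
  map g (seq (s + t) L) = map (fun j => g (s + j)%nat) (seq t L).
Proof. induction L; intros; simpl. reflexivity. f_equal. rewrite <- Nat.add_succ_r. apply IHL. Qed.

Theorem lemma3p10 (n : nat) :
  (5 < n)%nat -> (n mod 4 = 1)%nat ->
  let m := (n - 1)%nat in
  let f := fun r : nat => energy_D_negneg r (m - r) in
  (forall r : nat, (2 <= r <= n - 3)%nat -> Nat.even r = true -> f r <= f 4%nat) /\
  (((m / 2) mod 4 = 0)%nat ->
     LocallySorted (fun a b => f a > f b)
       (map (fun j => 4 * (j + 1))%nat (seq 0 (m / 8)) ++
        map (fun j => m / 2 - 2 - 4 * j)%nat (seq 0 (m / 8)))) /\
  (((m / 2) mod 4 = 2)%nat ->
     LocallySorted (fun a b => f a > f b)
       (map (fun j => 4 * (j + 1))%nat (seq 0 (m / 8)) ++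
        map (fun j => m / 2 - 4 * j)%nat (seq 0 (m / 8 + 1)))).
Proof.
  intros Hn Hmod m f. unfold f, m. clear f m.
  pose proof (Nat.div_mod n 4 ltac:(lia)) as E. rewrite Hmod in E. set (q := (n / 4)%nat) in *.
  clearbody q. subst n. replace (4 * q + 1 - 1)%nat with (4 * q)%nat by lia.
  change (fun r => energy_D_negneg r (4 * q - r)) with (F (4 * q)).
  split; [|split].
  - intros r Hr He. apply maxpart; auto; lia.
  - intros HA. assert (exists K, q = 2 * K /\ 1 <= K)%nat as [K [HK HK1]] by (exists (q/2)%nat; lia).
    replace (4 * q / 8)%nat with K by lia. replace (4 * q / 2)%nat with (4 * K)%nat by lia.
    set (g := fun i => if (i <? K)%nat then (4 * (i + 1))%nat else (4 * K - 2 - 4 * (i - K))%nat).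
    replace (map (fun j => 4 * (j + 1))%nat (seq 0 K) ++ map (fun j => 4 * K - 2 - 4 * j)%nat (seq 0 K))
      with (map g (seq 0 (K + K))).
    2:{ rewrite seq_app, map_app. f_equal.
        - apply map_ext_in. intros i Hi. apply in_seq in Hi. unfold g. destruct (Nat.ltb_spec i K); lia.
        - replace (0 + K)%nat with (K + 0)%nat by lia. rewrite map_shift.
          apply map_ext_in. intros i Hi. apply in_seq in Hi. unfold g. destruct (Nat.ltb_spec (K + i) K); lia. }
    apply LS_map. intros i _ Hi. unfold g.
    destruct (Nat.ltb_spec i K); destruct (Nat.ltb_spec (S i) K).
    + replace (4 * (S i + 1))%nat with (4 * (i + 1) + 4)%nat by lia. apply stepC; lia.
    + assert (S i = K) by lia. replace (4 * (i + 1))%nat with (4 * K)%nat by lia.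
      replace (4 * K - 2 - 4 * (S i - K))%nat with (4 * K - 2)%nat by lia. apply juncA; lia.
    + lia.
    + replace (4 * K - 2 - 4 * (i - K))%nat with ((4 * K - 2 - 4 * (S i - K)) + 4)%nat by lia.
      apply stepK; lia.
  - intros HB. assert (exists K, q = 2 * K + 1 /\ 1 <= K)%nat as [K [HK HK1]] by (exists (q/2)%nat; lia).
    replace (4 * q / 8)%nat with K by lia. replace (4 * q / 2)%nat with (4 * K + 2)%nat by lia.
    set (g := fun i => if (i <? K)%nat then (4 * (i + 1))%nat else (4 * K + 2 - 4 * (i - K))%nat).
    replace (map (fun j => 4 * (j + 1))%nat (seq 0 K) ++ map (fun j => 4 * K + 2 - 4 * j)%nat (seq 0 (K + 1)))
      with (map g (seq 0 (K + (K + 1)))).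
    2:{ rewrite seq_app, map_app. f_equal.
        - apply map_ext_in. intros i Hi. apply in_seq in Hi. unfold g. destruct (Nat.ltb_spec i K); lia.
        - replace (0 + K)%nat with (K + 0)%nat by lia. rewrite map_shift.
          apply map_ext_in. intros i Hi. apply in_seq in Hi. unfold g. destruct (Nat.ltb_spec (K + i) K); lia. }
    apply LS_map. intros i _ Hi. unfold g.
    destruct (Nat.ltb_spec i K); destruct (Nat.ltb_spec (S i) K).
    + replace (4 * (S i + 1))%nat with (4 * (i + 1) + 4)%nat by lia. apply stepC; lia.
    + assert (S i = K) by lia. replace (4 * (i + 1))%nat with (4 * K + 2 - 2)%nat by lia.
      replace (4 * K + 2 - 4 * (S i - K))%nat with (4 * K + 2)%nat by lia. apply juncB; lia.
    + lia.
    + replace (4 * K + 2 - 4 * (i - K))%nat with ((4 * K + 2 - 4 * (S i - K)) + 4)%nat by lia.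
      apply stepK; lia.
Qed.
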